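(* For $\alpha_2\in\mathbb{C}$ consider the system $$\frac{dx}{dt}=y,\quad \frac{dy}{dt}=z,\quad \frac{dz}{dt}=-6y^2+w+\frac t4,\quad \frac{dw}{dt}=wq+\frac{2\alpha_2-1}{4},\quad \frac{dq}{dt}=-\frac12q^2-4y .$$ Write $( * )=(x,y,z,w,q,t;\alpha_2)$ and $D:=t+2w+2yq^2-8y^2-4zq$. Define $$s_0:( * )\mapsto\left(x,y,z,w,q+\frac{\alpha_2-\frac12}{w},t;1-\alpha_2\right),$$ $$s_1:( * )\mapsto\Big(x+\frac{2\alpha_2+1}{2D},\ y+\frac{(2\alpha_2+1)q}{2D}-\frac{(2\alpha_2+1)^2}{4D^2},\ z+\frac{(2\alpha_2+1)(q^2-8y)}{4D}-\frac{3(2\alpha_2+1)^2q}{4D^2}+\frac{(2\alpha_2+1)^3}{4D^3},$$ $$w+\frac{2(2\alpha_2+1)(yq-z)}{D}+\frac{(2\alpha_2+1)^2(q^2+4y)}{4D^2},\ q-\frac{2\alpha_2+1}{D},\ t;\ -1-\alpha_2\Big),$$ $$\pi:( * )\mapsto\left(x+\frac q2,\ -\left(y+\frac{q^2}{4}\right),\ -\left(z-\frac14q(q^2+8y)\right),\ -\left(w+yq^2-4y^2-2zq+\frac t2\right),\ -q,\ t;\ -\alpha_2\right).$$ Then $s_0,s_1,\pi$ are Bäcklund transformations of this system (each maps solutions with parameter $\alpha_2$ to solutions with the transformed parameter), and they generate a group of Bäcklund transformations realizing the extended affine Weyl group of type $A_1^{(1)}$.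
   Context: The extended affine Weyl group of type $A_1^{(1)}$ is the group generated by $s_0,s_1,\pi$ with the relations $s_0^2=s_1^2=\pi^2=1$ and $\pi s_0=s_1\pi$. A transformation is applied to a rational function $g$ of $(x,y,z,w,q,t,\alpha_2)$ by substituting the images of the variables and the parameter into $g$. *)

(* Defs.v *)
From HB Require Import structures.
From mathcomp Require Import all_boot all_order all_algebra.
Set Implicit Arguments. Unset Strict Implicit. Unset Printing Implicit Defensive.
Import GRing.Theory.
Local Open Scope ring_scope.

(* A point (x,y,z,w,q,t;alpha2) of the extended phase space, with coordinates
   in a field K (typically a differential field of functions of t). *)
Record pt (K : Type) := Pt { px : K; py : K; pz : K; pw : K; pq : K; pt_t : K; pa : K }.

Section Defs.
Variable K : fieldType.

Definition is_derivation (d : K -> K) : Prop :=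
  (forall a b, d (a + b) = d a + d b) /\ (forall a b, d (a * b) = d a * b + a * d b).

(* The point p satisfies the system (with independent variable t, i.e. d t = 1,
   and constant parameter alpha2, i.e. d alpha2 = 0). *)
Definition is_solution (d : K -> K) (p : pt K) : Prop :=
  let: Pt x y z w q t a := p in
  (d t = 1 /\ d a = 0) /\
  [/\ d x = y, d y = z,
      d z = - 6%:R * y ^+ 2 + w + t / 4%:R,
      d w = w * q + (2%:R * a - 1) / 4%:R &
      d q = - (q ^+ 2) / 2%:R - 4%:R * y].

Definition Dfun (p : pt K) : K :=
  let: Pt x y z w q t a := p in
  t + 2%:R * w + 2%:R * y * q ^+ 2 - 8%:R * y ^+ 2 - 4%:R * z * q.

Definition s0 (p : pt K) : pt K :=
  let: Pt x y z w q t a := p in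
  Pt x y z w (q + (a - 1 / 2%:R) / w) t (1 - a).

Definition s1 (p : pt K) : pt K :=
  let: Pt x y z w q t a := p in
  let D := Dfun p in
  let b := 2%:R * a + 1 in
  Pt (x + b / (2%:R * D))
     (y + b * q / (2%:R * D) - b ^+ 2 / (4%:R * D ^+ 2))
     (z + b * (q ^+ 2 - 8%:R * y) / (4%:R * D) - 3%:R * b ^+ 2 * q / (4%:R * D ^+ 2)
        + b ^+ 3 / (4%:R * D ^+ 3))
     (w + 2%:R * b * (y * q - z) / D + b ^+ 2 * (q ^+ 2 + 4%:R * y) / (4%:R * D ^+ 2))
     (q - b / D)
     t
     (- 1 - a).

Definition bpi (p : pt K) : pt K :=
  let: Pt x y z w q t a := p in
  Pt (x + q / 2%:R)
     (- (y + q ^+ 2 / 4%:R))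
     (- (z - q * (q ^+ 2 + 8%:R * y) / 4%:R))
     (- (w + y * q ^+ 2 - 4%:R * y ^+ 2 - 2%:R * z * q + t / 2%:R))
     (- q)
     t
     (- a).

End Defs.

(* Main.v *)
Require Import Defs.
From HB Require Import structures.
From mathcomp Require Import all_boot all_order all_algebra.
From mathcomp Require Import ring.
Import GRing.Theory.
Local Open Scope ring_scope.

Set Implicit Arguments.
Section Deriv.
Variable K : fieldType.
Variable d : K -> K.
Hypothesis H : is_derivation d.

Lemma der0 : d 0 = 0.
Proof. case: H => hA _. have h := hA 0 0. rewrite addr0 in h. by apply: (addrI (d 0)); rewrite addr0 -h. Qed.

Lemma der1 : d 1 = 0.
Proof. case: H => _ hM. have h := hM 1 1. rewrite !mulr1 mul1r in h. by apply: (addrI (d 1)); rewrite addr0 -h. Qed.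

Lemma derD u v : d (u + v) = d u + d v.
Proof. by case: H. Qed.

Lemma derM u v : d (u * v) = d u * v + u * d v.
Proof. by case: H. Qed.

Lemma derN u : d (- u) = - d u.
Proof. apply/eqP; rewrite -subr_eq0 opprK -derD addrC subrr der0 //. Qed.

Lemma dern n : d (n%:R) = 0.
Proof. elim: n => [|n IH]; first by rewrite der0. by rewrite -addn1 natrD derD IH der1 addr0. Qed.

Lemma derV u : d (u^-1) = - d u / u ^+ 2.
Proof.
have [->|Hu] := eqVneq u 0; first by rewrite invr0 der0 expr0n /= invr0 mulr0.
have h := derM u u^-1. rewrite divff // der1 in h.
have e : u * d u^-1 = - (d u * u^-1) by apply/eqP; rewrite -addr_eq0 addrC -h.
transitivity (u^-1 * (u * d u^-1)); first by rewrite mulrA mulVf // mul1r.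
rewrite e. field. exact: Hu.
Qed.
End Deriv.

Ltac dexp := rewrite ?exprS ?expr0.
Ltac dsimp H := rewrite ?(derD H, derM H, derN H, derV H, dern H, der1 H, der0 H).

Lemma bk_pi (K : fieldType) (charK : [pchar K] =i pred0) d (p : pt K) :
  is_derivation d -> is_solution d p -> is_solution d (bpi p).
Proof.
have nz n : (n.+1)%:R != 0 :> K by move/pcharf0P: charK => ->.
case: p => x y z w q t a H [[Ht Ha] [Hx Hy Hz Hw Hq]] /=.
split; [split|split]; dexp; dsimp H; rewrite ?Ht ?Ha ?Hx ?Hy ?Hz ?Hw ?Hq; field; by rewrite ?nz.
Qed.

Lemma bk_s0 (K : fieldType) (charK : [pchar K] =i pred0) d (p : pt K) :
  is_derivation d -> is_solution d p -> pw p != 0 -> is_solution d (s0 p).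
Proof.
have nz n : (n.+1)%:R != 0 :> K by move/pcharf0P: charK => ->.
case: p => x y z w q t a H [[Ht Ha] [Hx Hy Hz Hw Hq]] /= Hw0.
split; [split|split]; dexp; dsimp H; rewrite ?Ht ?Ha ?Hx ?Hy ?Hz ?Hw ?Hq; field; by rewrite ?nz ?Hw0.
Qed.
Lemma bk_s1 (K : fieldType) (charK : [pchar K] =i pred0) d (p : pt K) :
  is_derivation d -> is_solution d p -> Dfun p != 0 -> is_solution d (s1 p).
Proof.
have nz n : (n.+1)%:R != 0 :> K by move/pcharf0P: charK => ->.
case: p => x y z w q t a H [[Ht Ha] [Hx Hy Hz Hw Hq]].
rewrite /s1.
set D := Dfun (Pt x y z w q t a).
have HdD : d D = (2%:R * a + 1) / 2%:R - q * D.
  rewrite /D /=. dexp; dsimp H; rewrite ?Ht ?Ha ?Hx ?Hy ?Hz ?Hw ?Hq. field; by rewrite ?nz.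
have Htt : t = D - (2%:R * w + 2%:R * y * q ^+ 2 - 8%:R * y ^+ 2 - 4%:R * z * q).
  by rewrite /D /=; ring.
clearbody D => HD /=.
split; [split|split]; dexp; dsimp H; rewrite ?Ht ?Ha ?Hx ?Hy ?Hz ?Hw ?Hq ?HdD; rewrite ?Htt; field; by rewrite ?nz ?HD.
Qed.

Lemma rel_s0 (K : fieldType) (charK : [pchar K] =i pred0) (p : pt K) :
  pw p != 0 -> s0 (s0 p) = p.
Proof.
have nz n : (n.+1)%:R != 0 :> K by move/pcharf0P: charK => ->.
case: p => x y z w q t a /= Hw; f_equal; field; by rewrite ?oppr_eq0 ?mulf_eq0 ?(negbTE (nz _)) ?(negbTE Hw) ?nz ?Hw.
Qed.

Lemma rel_pi (K : fieldType) (charK : [pchar K] =i pred0) (p : pt K) :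
  bpi (bpi p) = p.
Proof.
have nz n : (n.+1)%:R != 0 :> K by move/pcharf0P: charK => ->.
case: p => x y z w q t a /=; f_equal; field; by rewrite ?nz.
Qed.

Lemma Ds1 (K : fieldType) (charK : [pchar K] =i pred0) (p : pt K) :
  Dfun p != 0 -> Dfun (s1 p) = Dfun p.
Proof.
have nz n : (n.+1)%:R != 0 :> K by move/pcharf0P: charK => ->.
case: p => x y z w q t a.
rewrite /s1.
set D := Dfun (Pt x y z w q t a).
have Ht : t = D - (2%:R * w + 2%:R * y * q ^+ 2 - 8%:R * y ^+ 2 - 4%:R * z * q).
  by rewrite /D /=; ring.
clearbody D => HD.
rewrite /Dfun /=. rewrite Ht. field. by rewrite !nz HD.
Qed.

Lemma rel_s1 (K : fieldType) (charK : [pchar K] =i pred0) (p : pt K) :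
  Dfun p != 0 -> Dfun (s1 p) != 0 -> s1 (s1 p) = p.
Proof.
have nz n : (n.+1)%:R != 0 :> K by move/pcharf0P: charK => ->.
move=> HD _. rewrite {1}/s1 (@Ds1 _ charK p HD).
case: p HD => x y z w q t a.
rewrite /s1.
set D := Dfun (Pt x y z w q t a).
clearbody D => HD /=.
f_equal; field; by rewrite ?nz ?HD.
Qed.

Lemma rel_pis0 (K : fieldType) (charK : [pchar K] =i pred0) (p : pt K) :
  pw p != 0 -> Dfun (bpi p) != 0 -> bpi (s0 p) = s1 (bpi p).
Proof.
have nz n : (n.+1)%:R != 0 :> K by move/pcharf0P: charK => ->.
case: p => x y z w q t a Hw _.
have HDe : Dfun (bpi (Pt x y z w q t a)) = - (2%:R * w).
  rewrite /=; field; by rewrite ?nz.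
rewrite /s1 HDe /=.
f_equal; field; by rewrite ?oppr_eq0 ?mulf_eq0 ?(negbTE (nz _)) ?(negbTE Hw) ?nz ?Hw.
Qed.

Theorem theorem9p2 (K : fieldType) (charK : [pchar K] =i pred0) :
  (* Backlund property: s0, s1, pi map solutions to solutions
     (wherever the transformation is defined) *)
  (forall (d : K -> K) (p : pt K), is_derivation d -> is_solution d p ->
     [/\ pw p != 0 -> is_solution d (s0 p),
         Dfun p != 0 -> is_solution d (s1 p) &
         is_solution d (bpi p)]) /\
  (* defining relations of the extended affine Weyl group of type A_1^(1):
     s0^2 = s1^2 = pi^2 = 1 and pi s0 = s1 pi (as birational maps) *)
  (forall p : pt K, pw p != 0 -> s0 (s0 p) = p) /\
  (forall p : pt K, Dfun p != 0 -> Dfun (s1 p) != 0 -> s1 (s1 p) = p) /\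
  (forall p : pt K, bpi (bpi p) = p) /\
  (forall p : pt K, pw p != 0 -> Dfun (bpi p) != 0 -> bpi (s0 p) = s1 (bpi p)).
Proof.
split.
  move=> d p H S; split.
  - exact: bk_s0 charK d p H S.
  - exact: bk_s1 charK d p H S.
  - exact: bk_pi charK d p H S.
split; first exact: rel_s0 charK.
split; first exact: rel_s1 charK.
split; first exact: rel_pi charK.
exact: rel_pis0 charK.
Qed.
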